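(* In the category of cartesian cubical sets, $\mathrm{I}^{\mathrm{I}}\cong \mathrm{I}+1$.
   Context: Let $\mathbb{B}$ be the category of finite sets $[n]=\{\bot,x_1,\dots,x_n,\top\}$ ($n\ge0$, $\bot\ne\top$) and functions preserving $\bot,\top$; the cartesian cube category is $\mathbb{C}_\times=\mathbb{B}^{op}$, and cartesian cubical sets are presheaves on $\mathbb{C}_\times$. $\mathrm{I}$ is the representable presheaf on $[1]$ (the $1$-cube), $1$ is the terminal presheaf, $\mathrm{I}^{\mathrm{I}}$ is the exponential and $+$ the coproduct. *)

(* Defs.v *)
From Stdlib Require Import FunctionalExtensionality ProofIrrelevance.
From mathcomp Require Import all_boot.

Set Implicit Arguments.
Unset Strict Implicit.
Unset Printing Implicit Defensive.

(* The category B: objects [n] = {bot, x_1, ..., x_n, top}, encoded as     *)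
(* 'I_(n+2) with bot = ord0 (value 0) and top = ord_max (value n+1).       *)

Definition pt (n : nat) := 'I_n.+2.
Definition bot {n : nat} : pt n := ord0.
Definition top {n : nat} : pt n := ord_max.

Definition Bhom (m n : nat) :=
  {f : {ffun pt m -> pt n} | (f bot == bot) && (f top == top)}.

Lemma Bhom_eq m n (f g : Bhom m n) : (forall i, val f i = val g i) -> f = g.
Proof. by move=> H; apply: val_inj; apply/ffunP. Qed.

Lemma Bid_proof n :
  let f := [ffun i : pt n => i] in (f bot == bot) && (f top == top).
Proof. by rewrite /= !ffunE !eqxx. Qed.

Definition Bid (n : nat) : Bhom n n :=
  exist (fun f : {ffun pt n -> pt n} => (f bot == bot) && (f top == top)) _ (Bid_proof n).

Lemma Bcomp_proof l m n (g : Bhom m n) (f : Bhom l m) :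
  let h := [ffun i : pt l => val g (val f i)] in (h bot == bot) && (h top == top).
Proof.
case: g => g /= /andP[/eqP g0 /eqP g1]; case: f => f /= /andP[/eqP f0 /eqP f1].
by rewrite !ffunE f0 f1 g0 g1 !eqxx.
Qed.

Definition Bcomp l m n (g : Bhom m n) (f : Bhom l m) : Bhom l n :=
  exist (fun h : {ffun pt l -> pt n} => (h bot == bot) && (h top == top)) _
        (Bcomp_proof g f).

Lemma BcompA k l m n (h : Bhom m n) (g : Bhom l m) (f : Bhom k l) :
  Bcomp h (Bcomp g f) = Bcomp (Bcomp h g) f.
Proof. by apply: Bhom_eq => i /=; rewrite !ffunE. Qed.

Lemma Bcomp_id_l m n (f : Bhom m n) : Bcomp (Bid n) f = f.
Proof. by apply: Bhom_eq => i /=; rewrite !ffunE. Qed.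

Lemma Bcomp_id_r m n (f : Bhom m n) : Bcomp f (Bid m) = f.
Proof. by apply: Bhom_eq => i /=; rewrite !ffunE. Qed.

(* Cartesian cubical sets: presheaves on C_x = B^op, i.e. covariant        *)
(* functors B -> Type.                                                      *)

Record cset := CSet {
  cs_ob :> nat -> Type;
  cs_act : forall m n, Bhom m n -> cs_ob m -> cs_ob n;
  cs_act_id : forall n (x : cs_ob n), cs_act (Bid n) x = x;
  cs_act_comp : forall l m n (g : Bhom m n) (f : Bhom l m) (x : cs_ob l),
      cs_act (Bcomp g f) x = cs_act g (cs_act f x)
}.

Definition natural (X Y : cset) (phi : forall n, X n -> Y n) : Prop :=
  forall m n (f : Bhom m n) (x : X m),
    phi n (@cs_act X _ _ f x) = @cs_act Y _ _ f (phi m x).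

Definition cset_iso (X Y : cset) : Prop :=
  exists (phi : forall n, X n -> Y n) (psi : forall n, Y n -> X n),
    [/\ natural phi, natural psi,
        (forall n (x : X n), psi n (phi n x) = x) &
        (forall n (y : Y n), phi n (psi n y) = y)].

(* representable presheaf y[k] = C_x(-, [k]) = B([k], -) *)
Definition yoneda (k : nat) : cset :=
  @CSet (fun n => Bhom k n) (fun m n g f => Bcomp g f)
        (fun n f => Bcomp_id_l f)
        (fun l m n g f x => esym (BcompA g f x)).

Definition Icube : cset := yoneda 1.

Definition Term : cset :=
  @CSet (fun _ => unit) (fun _ _ _ x => x) (fun _ _ => erefl) (fun _ _ _ _ _ _ => erefl).

Definition cop_act (X Y : cset) m n (f : Bhom m n) (z : X m + Y m) : X n + Y n :=
  match z with inl x => inl (@cs_act X _ _ f x) | inr y => inr (@cs_act Y _ _ f y) end.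

Lemma cop_act_id (X Y : cset) n (z : X n + Y n) : cop_act (Bid n) z = z.
Proof. by case: z => x /=; rewrite cs_act_id. Qed.

Lemma cop_act_comp (X Y : cset) l m n (g : Bhom m n) (f : Bhom l m) (z : X l + Y l) :
  cop_act (Bcomp g f) z = cop_act g (cop_act f z).
Proof. by case: z => x /=; rewrite cs_act_comp. Qed.

Definition Coprod (X Y : cset) : cset :=
  @CSet (fun n => (X n + Y n)%type) (@cop_act X Y)
        (@cop_act_id X Y) (@cop_act_comp X Y).

(* exponential: (Y^X)([n]) = Nat(y[n] x X, Y), naturality over B *)
Definition exp_ob (X Y : cset) (n : nat) :=
  {eta : forall m, Bhom n m -> X m -> Y m |
     forall m p (g : Bhom m p) (f : Bhom n m) (x : X m),
       eta p (Bcomp g f) (@cs_act X _ _ g x) = @cs_act Y _ _ g (eta m f x)}.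

Lemma exp_eq (X Y : cset) n (e1 e2 : exp_ob X Y n) : proj1_sig e1 = proj1_sig e2 -> e1 = e2.
Proof.
case: e1 => a pa; case: e2 => b pb /= eab; subst b.
by rewrite (proof_irrelevance _ pa pb).
Qed.

Lemma exp_act_proof (X Y : cset) n n' (h : Bhom n n') (e : exp_ob X Y n) :
  forall m p (g : Bhom m p) (f : Bhom n' m) (x : X m),
    proj1_sig e p (Bcomp (Bcomp g f) h) (@cs_act X _ _ g x)
    = @cs_act Y _ _ g (proj1_sig e m (Bcomp f h) x).
Proof. by move=> m p g f x; rewrite -BcompA (svalP e). Qed.

Definition exp_act (X Y : cset) n n' (h : Bhom n n') (e : exp_ob X Y n)
  : exp_ob X Y n' :=
  exist _ (fun m f x => proj1_sig e m (Bcomp f h) x) (exp_act_proof h e).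

Lemma exp_act_id (X Y : cset) n (e : exp_ob X Y n) : exp_act (Bid n) e = e.
Proof.
apply: exp_eq => /=.
apply: functional_extensionality_dep => m.
apply: functional_extensionality => f.
by rewrite Bcomp_id_r.
Qed.

Lemma exp_act_comp (X Y : cset) l m n (g : Bhom m n) (f : Bhom l m)
  (e : exp_ob X Y l) : exp_act (Bcomp g f) e = exp_act g (exp_act f e).
Proof.
apply: exp_eq => /=.
apply: functional_extensionality_dep => p.
apply: functional_extensionality => h.
by rewrite BcompA.
Qed.

Definition Exp (X Y : cset) : cset :=
  @CSet (exp_ob X Y) (@exp_act X Y) (@exp_act_id X Y) (@exp_act_comp X Y).

(* Main.v *)
Require Import Defs.
From mathcomp Require Import all_boot.
From Stdlib Require Import FunctionalExtensionality ProofIrrelevance.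
From mathcomp Require Import zify.

Set Implicit Arguments.
Unset Strict Implicit.
Unset Printing Implicit Defensive.

Definition mkB m n (f : pt m -> pt n) (H : (f bot == bot) && (f top == top)) : Bhom m n :=
  exist (fun h : {ffun pt m -> pt n} => (h bot == bot) && (h top == top)) [ffun i => f i]
   (etrans (congr2 andb (congr1 (fun v => v == bot) (ffunE f bot))
                        (congr1 (fun v => v == top) (ffunE f top))) H).

Lemma mkBE m n f H i : val (@mkB m n f H) i = f i.
Proof. by rewrite /= ffunE. Qed.

Lemma Bbot m n (f : Bhom m n) : val f bot = bot.
Proof. by case: f => f /= /andP[/eqP -> _]. Qed.
Lemma Btop m n (f : Bhom m n) : val f top = top.
Proof. by case: f => f /= /andP[_ /eqP ->]. Qed.

Definition x1 : pt 1 := inord 1.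

Lemma B1_eq m (f g : Bhom 1 m) : val f x1 = val g x1 -> f = g.
Proof.
move=> H; apply: Bhom_eq => i.
have [->|[->|->]] : i = bot \/ i = x1 \/ i = top.
  case: i => [[|[|[|k]]] Hi].
  - by left; apply: val_inj.
  - by right; left; apply: val_inj; rewrite /= inordK.
  - by right; right; apply: val_inj.
  - by [].
- by rewrite !Bbot.
- exact: H.
- by rewrite !Btop.
Qed.

Definition iotaf n (i : pt n) : pt n.+1 :=
  inord (if val i == n.+1 then n.+2 else val i).
Arguments iotaf : clear implicits.
Lemma iotaP n : (iotaf n bot == bot) && (iotaf n top == top).
Proof. by apply/andP; split; apply/eqP; apply: val_inj; rewrite /iotaf /= inordK ?eqxx. Qed.
Definition iotaB n : Bhom n n.+1 := mkB (iotaP n).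

Definition genf n (i : pt 1) : pt n.+1 :=
  inord (if val i == 0 then 0 else if val i == 1 then n.+1 else n.+2).
Arguments genf : clear implicits.
Lemma genP n : (genf n bot == bot) && (genf n top == top).
Proof. by apply/andP; split; apply/eqP; apply: val_inj; rewrite /genf /= inordK. Qed.
Definition genB n : Bhom 1 n.+1 := mkB (genP n).

Definition rhof n (i : pt n.+1) : pt n :=
  inord (if val i == n.+1 then 0 else if val i == n.+2 then n.+1 else val i).
Lemma rhoP n : (rhof (bot : pt n.+1) == bot) && (rhof (top : pt n.+1) == top).
Proof.
apply/andP; split; apply/eqP; apply: val_inj; rewrite /rhof /=.
  by rewrite inordK.
have H : (n.+2 == n.+1) = false by lia.
by rewrite H eqxx inordK.
Qed.
Lemma rho_bot n : rhof (bot : pt n.+1) = bot.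
Proof. by case/andP: (rhoP n) => /eqP. Qed.
Lemma rho_top n : rhof (top : pt n.+1) = top.
Proof. by case/andP: (rhoP n) => _ /eqP. Qed.
Definition rhoB n : Bhom n.+1 n := mkB (rhoP n).

Definition hf n m (f : Bhom n m) (c : pt m) (i : pt n.+1) : pt m :=
  if val i == n.+1 then c else val f (rhof i).
Lemma hP n m (f : Bhom n m) c : (hf f c bot == bot) && (hf f c top == top).
Proof.
apply/andP; split; apply/eqP; rewrite /hf /=.
- by rewrite rho_bot Bbot.
- have H : (n.+2 == n.+1) = false by lia.
  by rewrite H rho_top Btop.
Qed.
Definition hB n m (f : Bhom n m) c : Bhom n.+1 m := mkB (hP f c).

Lemma val_iota n (i : pt n) : nat_of_ord (iotaf n i) = if nat_of_ord i == n.+1 then n.+2 else nat_of_ord i.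
Proof. rewrite /iotaf inordK //; case: i => /= i Hi; case: ifP => /eqP; lia. Qed.

Lemma rho_iota n (i : pt n) : rhof (iotaf n i) = i.
Proof.
apply: val_inj; rewrite /rhof /= val_iota; case: i => /= i Hi.
have [->|ne] := eqVneq i n.+1.
  have H : (n.+2 == n.+1) = false by lia.
  by rewrite eqxx H inordK.
have H : (i == n.+2) = false by lia.
by rewrite (negbTE ne) H inordK.
Qed.

Lemma h_iota n m (f : Bhom n m) c : Bcomp (hB f c) (iotaB n) = f.
Proof.
apply: Bhom_eq => i /=; rewrite !ffunE /hf /= val_iota rho_iota.
rewrite ifF //; case: i => /= i Hi; case: ifP => /eqP; lia.
Qed.

Lemma h_gen n m (f : Bhom n m) (x : Bhom 1 m) : Bcomp (hB f (val x x1)) (genB n) = x.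
Proof.
apply: B1_eq => /=; rewrite !ffunE /hf /genf /x1 /= !inordK //=.
by rewrite eqxx.
Qed.

Section Main.
Local Notation E := (Exp Icube Icube).
Local Notation C := (Coprod Icube Term).

Definition psi n (z : C n) : E n :=
  match z with
  | inl a => @exist _ (fun eta : forall m, Bhom n m -> Bhom 1 m -> Bhom 1 m => forall m p (g : Bhom m p) (f : Bhom n m) (x : Bhom 1 m), eta p (Bcomp g f) (Bcomp g x) = Bcomp g (eta m f x)) (fun m (f : Bhom n m) (x : Bhom 1 m) => Bcomp f a)
                   (fun m p g f x => esym (BcompA g f a))
  | inr _ => @exist _ (fun eta : forall m, Bhom n m -> Bhom 1 m -> Bhom 1 m => forall m p (g : Bhom m p) (f : Bhom n m) (x : Bhom 1 m), eta p (Bcomp g f) (Bcomp g x) = Bcomp g (eta m f x)) (fun m (f : Bhom n m) (x : Bhom 1 m) => x)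
                   (fun m p g f x => erefl)
  end.

Definition phi n (e : E n) : C n :=
  let w := proj1_sig e n.+1 (iotaB n) (genB n) in
  if val (val w x1) == n.+1 then inr tt else inl (Bcomp (rhoB n) w).

Lemma psi_nat : natural psi.
Proof.
move=> m n k [a|[]]; apply: exp_eq => //=.
apply: functional_extensionality_dep => p; apply: functional_extensionality => f.
apply: functional_extensionality => x; exact: BcompA.
Qed.

Lemma phi_psi n (z : C n) : phi (psi z) = z.
Proof.
case: z => [a|[]]; rewrite /phi /=.
- rewrite !ffunE /iotaf /= inordK; last by case: (val a x1) => /= i Hi; case: ifP; lia.
  rewrite ifF; last by case: (val a x1) => /= i Hi; apply/eqP; case: ifP; lia.
  congr inl; apply: B1_eq => /=; rewrite !ffunE /rhof /iotaf /=.
  apply: val_inj; rewrite /= !inordK; case: (val a x1) => /= i Hi;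
   repeat (case: ifP => /eqP); lia.
- by rewrite !ffunE /genf /x1 /= !inordK //= eqxx.
Qed.

Lemma psi_phi n (e : E n) : psi (phi e) = e.
Proof.
apply: exp_eq; case: e => eta Heta.
apply: functional_extensionality_dep => m; apply: functional_extensionality => f.
apply: functional_extensionality => x.
have key : eta m f x = Bcomp (hB f (val x x1)) (eta n.+1 (iotaB n) (genB n)).
  by have := Heta n.+1 m (hB f (val x x1)) (iotaB n) (genB n); rewrite /= h_iota h_gen.
rewrite /phi /= key; set w := eta n.+1 (iotaB n) (genB n).
case: ifP => /eqP Hw /=.
- apply: B1_eq => /=; rewrite !ffunE /hf ifT //; apply/eqP; exact: Hw.
- apply: (@B1_eq m) => /=; rewrite !ffunE /hf ifF //; apply/eqP; exact: Hw.
Qed.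

Lemma phi_nat : natural phi.
Proof.
move=> m n k e.
rewrite -{1}(psi_phi e) -(psi_nat k (phi e)) phi_psi //.
Qed.

End Main.

Theorem lemma2p5 : cset_iso (Exp Icube Icube) (Coprod Icube Term).
Proof.
exists phi, psi; split.
- exact: phi_nat.
- exact: psi_nat.
- exact: psi_phi.
- exact: phi_psi.
Qed.
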